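(* Let $r$ be either an integer with $r\ge 2$ or $r=\infty$. Then, with probability one, $$\lim_{n\to\infty}\|\hat p_n-p_0\|_r=0 .$$
   Context: For a real sequence $p=(p(k))_{k\in\mathbb N}$ (with $\mathbb N=\{0,1,2,\dots\}$) write $\|p\|_r=(\sum_{k\ge0}|p(k)|^r)^{1/r}$ for integers $r\ge1$ and $\|p\|_\infty=\sup_k|p(k)|$. For $k\ge1$ let $\Delta p(k)=p(k+1)-2p(k)+p(k-1)$. A sequence $p$ is convex if $\Delta p(k)\ge0$ for all integers $k\ge1$; let $\mathcal C$ be the set of convex sequences with $\|p\|_2<\infty$. Let $p_0$ be a convex probability mass function (pmf) on $\mathbb N$ whose support is either $\mathbb N$ or $\{0,1,\dots,S\}$ for some integer $S\ge1$. Let $X_1,X_2,\dots$ be i.i.d. with pmf $p_0$, let $p_n(j)=\frac1n\sum_{i=1}^n\mathbb 1\{X_i=j\}$ be the empirical pmf, and let the least squares estimator (LSE) $\hat p_n$ be the unique minimizer over $\mathcal C$ of $\Phi_n(p)=\frac12\sum_{j\in\mathbb N}(p_n(j)-p(j))^2$. *)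

(* Defs.v *)
From Stdlib Require Import Reals Lra Lia List.
Open Scope R_scope.

Definition Delta (p : nat -> R) (k : nat) : R :=
  p (S k) - 2 * p k + p (Nat.pred k).

Definition convex_seq (p : nat -> R) : Prop :=
  forall k : nat, (1 <= k)%nat -> 0 <= Delta p k.

Definition square_summable (p : nat -> R) : Prop :=
  exists l : R, infinite_sum (fun k => (p k) ^ 2) l.

Definition in_C (p : nat -> R) : Prop := convex_seq p /\ square_summable p.

Definition is_pmf (p : nat -> R) : Prop :=
  (forall k, 0 <= p k) /\ infinite_sum p 1.

Definition support_ok (p : nat -> R) : Prop :=
  (forall k, 0 < p k) \/
  (exists S : nat, (1 <= S)%nat /\ forall k, (0 < p k <-> (k <= S)%nat)).

Fixpoint count_eq (x : nat -> nat) (j : nat) (n : nat) : nat :=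
  match n with
  | O => O
  | S m => (if Nat.eqb (x m) j then 1 else 0) + count_eq x j m
  end.

(* Empirical pmf of X_1,...,X_n, where the sample is x 0, ..., x (n-1). *)
Definition empirical (x : nat -> nat) (n : nat) (j : nat) : R :=
  INR (count_eq x j n) / INR n.

Definition Phi_val (pn p : nat -> R) (v : R) : Prop :=
  infinite_sum (fun j => / 2 * (pn j - p j) ^ 2) v.

Definition is_LSE (pn q : nat -> R) : Prop :=
  in_C q /\
  forall p : nat -> R, in_C p ->
    forall a b : R, Phi_val pn q a -> Phi_val pn p b -> a <= b.

(* r : None = infinity, Some k = integer k.  lr_norm r p v  <->  ||p||_r = v *)
Definition lr_norm (r : option nat) (p : nat -> R) (v : R) : Prop :=
  match r with
  | Some k => 0 <= v /\ infinite_sum (fun j => (Rabs (p j)) ^ k) (v ^ k)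
  | None => is_lub (fun y => exists j, y = Rabs (p j)) v
  end.

(* Product measure of i.i.d. p0 on N^N: weight of the cylinder with prefix l *)
Fixpoint cyl_weight (p0 : nat -> R) (l : list nat) : R :=
  match l with
  | nil => 1
  | a :: t => p0 a * cyl_weight p0 t
  end.

Definition has_prefix (x : nat -> nat) (l : list nat) : Prop :=
  forall i, (i < length l)%nat -> x i = nth i l O.

(* E is a null set (outer measure zero) for the i.i.d. product measure p0^N:
   for every eps>0 it is covered by countably many cylinders of total mass <= eps *)
Definition null_set (p0 : nat -> R) (E : (nat -> nat) -> Prop) : Prop :=
  forall eps : R, 0 < eps ->
    exists cover : nat -> list nat,
      (forall x, E x -> exists m, has_prefix x (cover m)) /\
      (forall M, sum_f_R0 (fun m => cyl_weight p0 (cover m)) M <= eps).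

(* Main.v *)
Require Import Defs.
From Stdlib Require Import Reals.
From Stdlib Require Import Lra Lia List Classical ClassicalEpsilon Cantor Psatz.
Import ListNotations.
Open Scope R_scope.

Lemma sum_scal c (a : nat -> R) n : sum_f_R0 (fun i => c * a i) n = c * sum_f_R0 a n.
Proof. induction n; simpl; [ring| rewrite IHn; ring]. Qed.

Lemma cv_ext (u v : nat -> R) l : (forall n, u n = v n) -> Un_cv u l -> Un_cv v l.
Proof. intros H C e He. destruct (C e He) as [N HN]. exists N. intros n Hn. rewrite <- H. auto. Qed.

Lemma cv_const c : Un_cv (fun _ => c) c.
Proof. intros e He. exists O. intros n _. unfold Rdist. rewrite Rminus_diag, Rabs_R0. lra. Qed.

Lemma isum_lin a b la lb c d : infinite_sum a la -> infinite_sum b lb ->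
  infinite_sum (fun n => c * a n + d * b n) (c * la + d * lb).
Proof.
  intros Ha Hb.
  apply (cv_ext (fun n => c * sum_f_R0 a n + d * sum_f_R0 b n)).
  - intros n. rewrite plus_sum, !sum_scal. reflexivity.
  - apply CV_plus; apply CV_mult; auto; apply cv_const.
Qed.

Lemma isum_scal a la c : infinite_sum a la -> infinite_sum (fun n => c * a n) (c * la).
Proof.
  intros Ha. apply (cv_ext (fun n => c * sum_f_R0 a n)).
  - intros n. rewrite sum_scal. reflexivity.
  - apply CV_mult; auto; apply cv_const.
Qed.

Lemma isum_le a b la lb : (forall n, a n <= b n) -> infinite_sum a la -> infinite_sum b lb -> la <= lb.
Proof. intros H Ha Hb. apply (Rle_cv_lim (Un := sum_f_R0 a) (Vn := sum_f_R0 b)); auto.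
  intros n. apply sum_Rle. intros; auto. Qed.

Lemma isum_partial a l n : (forall k, 0 <= a k) -> infinite_sum a l -> sum_f_R0 a n <= l.
Proof. intros H Ha. apply sum_incr; auto. Qed.

Lemma isum_bound a l B : (forall n, sum_f_R0 a n <= B) -> infinite_sum a l -> l <= B.
Proof. intros H Ha. apply (Rle_cv_lim (Un := sum_f_R0 a) (Vn := fun _ => B)); auto. apply cv_const. Qed.

Lemma isum_dom a b : (forall n, 0 <= a n <= b n) -> (exists l, infinite_sum b l) -> exists l, infinite_sum a l.
Proof. intros H [l Hl].
  destruct (Rseries_CV_comp a b H (exist _ l Hl)) as [l' Hl']. exists l'. exact Hl'. Qed.

Lemma isum_nonneg a l : (forall k, 0 <= a k) -> infinite_sum a l -> 0 <= l.
Proof. intros H Ha. apply Rle_trans with (sum_f_R0 a 0). simpl; auto. apply isum_partial; auto. Qed.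

Lemma isum_fin a M : (forall k, (M < k)%nat -> a k = 0) -> infinite_sum a (sum_f_R0 a M).
Proof.
  intros H e He. exists M. intros n Hn.
  assert (sum_f_R0 a n = sum_f_R0 a M) as ->.
  { induction n. replace M with O by lia. reflexivity.
    destruct (Nat.eq_dec (S n) M) as [E|E]. rewrite E; reflexivity.
    simpl. rewrite IHn by lia. rewrite H by lia. ring. }
  unfold Rdist. rewrite Rminus_diag, Rabs_R0. lra.
Qed.

Lemma term_le_sum (f : nat -> R) j k : (forall i, 0 <= f i) -> (j <= k)%nat -> f j <= sum_f_R0 f k.
Proof. intros H Hj. induction k. replace j with O by lia. simpl; lra.
  destruct (Nat.eq_dec j (S k)). subst. simpl. pose proof (cond_pos_sum f k H). lra.
  simpl. specialize (IHk ltac:(lia)). specialize (H (S k)). lra. Qed.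

Definition lsum {A} (f : A -> R) (l : list A) : R := fold_right (fun x acc => f x + acc) 0 l.

Lemma lsum_app {A} f (l1 l2 : list A) : lsum f (l1 ++ l2) = lsum f l1 + lsum f l2.
Proof. induction l1; simpl; [lra| rewrite IHl1; lra]. Qed.

Lemma lsum_filter {A} f (p : A -> bool) l :
  lsum f l = lsum f (filter p l) + lsum f (filter (fun x => negb (p x)) l).
Proof. induction l as [|a l IH]; simpl; [lra|]. destruct (p a); simpl; rewrite IH; lra. Qed.

Lemma lsum_le {A} f g (l:list A) : (forall x, In x l -> f x <= g x) -> lsum f l <= lsum g l.
Proof. induction l; simpl; intros H; [lra|]. pose proof (H a (or_introl eq_refl)).
  assert (lsum f l <= lsum g l) by (apply IHl; auto). lra. Qed.

Lemma lsum_nonneg {A} f (l : list A) : (forall x, In x l -> 0 <= f x) -> 0 <= lsum f l.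
Proof. induction l; simpl; intros H; [lra|]. pose proof (H a (or_introl eq_refl)).
  assert (0 <= lsum f l) by (apply IHl; auto). lra. Qed.

Lemma lsum_map {A B} (f : B -> R) (g : A -> B) l : lsum f (map g l) = lsum (fun x => f (g x)) l.
Proof. induction l; simpl; [reflexivity| rewrite IHl; reflexivity]. Qed.

Lemma lsum_scal {A} c f (l : list A) : lsum (fun x => c * f x) l = c * lsum f l.
Proof. induction l; simpl; [ring| rewrite IHl; ring]. Qed.

Lemma lsum_plus {A} f g (l : list A) : lsum (fun x => f x + g x) l = lsum f l + lsum g l.
Proof. induction l; simpl; [ring| rewrite IHl; ring]. Qed.

Lemma lsum_ext_in {A} f g (l : list A) : (forall x, In x l -> f x = g x) -> lsum f l = lsum g l.
Proof. induction l; simpl; intros H; [reflexivity|]. rewrite H by auto. rewrite IHl; auto. Qed.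

Lemma nil_of_nomem {A} (l : list A) : (forall x, ~ In x l) -> l = [].
Proof. destruct l; auto. intros H; exfalso; apply (H a); left; auto. Qed.

Lemma lsum_const_nodup {A} f (l : list A) a : NoDup l -> (forall x, In x l -> x = a) -> 0 <= f a -> lsum f l <= f a.
Proof.
  intros Hn H Hf. destruct l as [|b [|c l]]; simpl.
  - lra.
  - rewrite (H b) by (left; auto). lra.
  - exfalso. inversion Hn; subst. apply H2. rewrite (H b), (H c) by (simpl; auto). left; auto.
Qed.

Lemma lsum_le_partial (f : nat -> R) N F : (forall a, 0 <= f a) -> NoDup F -> (forall a, In a F -> (a <= N)%nat) ->
  lsum f F <= sum_f_R0 f N.
Proof.
  intros Hf. revert F. induction N; intros F Hn HF.
  - simpl. apply lsum_const_nodup; auto. intros x Hx. specialize (HF x Hx). lia.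
  - rewrite (lsum_filter f (Nat.eqb (S N)) F). change (sum_f_R0 f (S N)) with (sum_f_R0 f N + f (S N)).
    assert (lsum f (filter (Nat.eqb (S N)) F) <= f (S N)).
    { apply lsum_const_nodup; auto. apply NoDup_filter; auto.
      intros x Hx. apply filter_In in Hx. destruct Hx as [_ Hx]. apply Nat.eqb_eq in Hx; auto. }
    assert (lsum f (filter (fun x => negb (Nat.eqb (S N) x)) F) <= sum_f_R0 f N).
    { apply IHN. apply NoDup_filter; auto. intros x Hx. apply filter_In in Hx. destruct Hx as [Hx1 Hx].
      apply Bool.negb_true_iff, Nat.eqb_neq in Hx. specialize (HF x Hx1). lia. }
    lra.
Qed.

Lemma cw_app p0 l1 l2 : cyl_weight p0 (l1 ++ l2) = cyl_weight p0 l1 * cyl_weight p0 l2.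
Proof. induction l1; simpl; [ring| rewrite IHl1; ring]. Qed.

Lemma cw_nonneg p0 l : (forall k, 0 <= p0 k) -> 0 <= cyl_weight p0 l.
Proof. intros H. induction l; simpl; [lra| apply Rmult_le_pos; auto]. Qed.

Definition supermart (p0 : nat -> R) (K : list nat -> R) : Prop :=
  (forall l, 0 <= K l) /\
  forall l F, NoDup F -> lsum (fun a => p0 a * K (l ++ [a])) F <= K l.

Definition prefix (l1 l2 : list nat) := exists s, l2 = l1 ++ s.

Definition antichain (A : list (list nat)) :=
  forall l1 l2, In l1 A -> In l2 A -> l1 <> l2 -> ~ prefix l1 l2.

Definition headb (a : nat) (l : list nat) : bool :=
  match l with [] => false | b :: _ => Nat.eqb b a end.

Lemma headb_cons a l : headb a l = true -> l = a :: tl l.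
Proof. destruct l; simpl; try discriminate. intros H; apply Nat.eqb_eq in H; subst; auto. Qed.

Lemma nodup_map_tl a (A : list (list nat)) : NoDup A -> (forall l, In l A -> headb a l = true) -> NoDup (map (@tl nat) A).
Proof.
  intros Hn H. apply NoDup_map_NoDup_ForallPairs; auto.
  intros x y Hx Hy E. rewrite (headb_cons a x), (headb_cons a y) by auto. rewrite E; auto.
Qed.

Lemma antichain_incl A B : antichain A -> incl B A -> antichain B.
Proof. intros H Hi l1 l2 H1 H2. apply H; auto. Qed.

Lemma antichain_map_tl a A : antichain A -> (forall l, In l A -> headb a l = true) -> antichain (map (@tl nat) A).
Proof.
  intros H Hh t1 t2 H1 H2 Hne [s Hs].
  apply in_map_iff in H1 as [l1 [E1 H1]]. apply in_map_iff in H2 as [l2 [E2 H2]].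
  apply (H l1 l2 H1 H2).
  - intros E. apply Hne. subst; auto.
  - exists s. rewrite (headb_cons a l1), (headb_cons a l2) by auto. rewrite E1, E2, Hs. reflexivity.
Qed.

Lemma group_heads n (f : list nat -> R) (g : nat -> R) :
  (forall a (T : list (list nat)), NoDup T -> antichain T -> (forall t, In t T -> (length t <= n)%nat) ->
      lsum (fun t => f (a :: t)) T <= g a) ->
  forall A, NoDup A -> antichain A -> (forall l, In l A -> l <> [] /\ (length l <= S n)%nat) ->
  exists H, NoDup H /\ (forall a, In a H -> exists t, In (a :: t) A) /\ lsum f A <= lsum g H.
Proof.
  intros Hyp. intros A. remember (length A) as m. assert (length A <= m)%nat as Hm by lia. clear Heqm.
  revert A Hm. induction m; intros A Hm Hn Ha Hl.
  - destruct A; simpl in Hm; try lia. exists []. split; [constructor|split; [intros b []|simpl; lra]].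
  - destruct A as [|l0 A'].
    + exists []. split; [constructor|split; [intros b []|simpl; lra]].
    + destruct l0 as [|a0 t0]. { exfalso. apply (proj1 (Hl [] (or_introl eq_refl))); auto. }
      rename a0 into a.
      set (A := (a :: t0) :: A') in *.
      rewrite (lsum_filter f (headb a) A).
      set (A1 := filter (headb a) A). set (A2 := filter (fun x => negb (headb a x)) A).
      assert (HA2 : filter (fun x => negb (headb a x)) A = filter (fun x => negb (headb a x)) A').
      { unfold A. simpl. rewrite Nat.eqb_refl. reflexivity. }
      destruct (IHm A2) as [H2 [Hnd2 [Hm2 Hs2]]].
      { unfold A2. rewrite HA2. pose proof (filter_length_le (fun x => negb (headb a x)) A'). simpl in Hm. lia. }
      { apply NoDup_filter; auto. }
      { apply (antichain_incl A); auto. intros x Hx. apply filter_In in Hx; tauto. }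
      { intros l Hl'. apply filter_In in Hl'. apply Hl; tauto. }
      assert (Hs1 : lsum f A1 <= g a).
      { assert (lsum f A1 = lsum (fun t => f (a :: t)) (map (@tl nat) A1)) as ->.
        { rewrite lsum_map. apply lsum_ext_in. intros x Hx. apply filter_In in Hx.
          rewrite <- (headb_cons a x) by tauto. reflexivity. }
        apply Hyp.
        - apply (nodup_map_tl a). apply NoDup_filter; auto. intros l Hl'. apply filter_In in Hl'; tauto.
        - apply (antichain_map_tl a). apply (antichain_incl A); auto. intros x Hx. apply filter_In in Hx; tauto.
          intros l Hl'. apply filter_In in Hl'; tauto.
        - intros t Ht. apply in_map_iff in Ht as [l [E Hl']]. apply filter_In in Hl' as [Hl1 Hl2].
          rewrite (headb_cons a l) in Hl1 by auto. specialize (Hl _ Hl1). simpl in Hl. subst. lia. }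
      exists (a :: H2). repeat split.
      * constructor; auto. intros Hin. destruct (Hm2 a Hin) as [t Ht]. unfold A2 in Ht.
        apply filter_In in Ht as [_ Ht]. simpl in Ht. rewrite Nat.eqb_refl in Ht. discriminate.
      * intros b [<-|Hb]. exists t0. left; auto. destruct (Hm2 b Hb) as [t Ht]. exists t.
        apply filter_In in Ht; tauto.
      * simpl. fold A1 A2. lra.
Qed.

Lemma antichain_bound p0 K : (forall k, 0 <= p0 k) -> supermart p0 K ->
  forall n r A, NoDup A -> antichain A -> (forall l, In l A -> (length l <= n)%nat) ->
  lsum (fun l => cyl_weight p0 l * K (r ++ l)) A <= K r.
Proof.
  intros Hp [HK0 HK]. induction n; intros r A Hn Ha Hl.
  - replace (K r) with (cyl_weight p0 [] * K (r ++ [])) by (simpl; rewrite app_nil_r; ring).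
    apply (lsum_const_nodup (fun l => cyl_weight p0 l * K (r ++ l)) A []); auto.
    + intros x Hx. specialize (Hl x Hx). destruct x; simpl in Hl; auto; lia.
    + simpl. rewrite app_nil_r. specialize (HK0 r). lra.
  - destruct (classic (In [] A)) as [Hin|Hnin].
    + replace (K r) with (cyl_weight p0 [] * K (r ++ [])) by (simpl; rewrite app_nil_r; ring).
      apply (lsum_const_nodup (fun l => cyl_weight p0 l * K (r ++ l)) A []); auto.
      * intros x Hx. destruct (list_eq_dec Nat.eq_dec [] x) as [E|E]; auto.
        exfalso. apply (Ha [] x Hin Hx E). exists x. reflexivity.
      * simpl. rewrite app_nil_r. specialize (HK0 r). lra.
    + destruct (group_heads n (fun l => cyl_weight p0 l * K (r ++ l)) (fun a => p0 a * K (r ++ [a])))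
        with (A := A) as [H [Hnd [_ Hs]]]; auto.
      * intros a T HnT HaT HlT.
        assert (lsum (fun t => cyl_weight p0 (a :: t) * K (r ++ a :: t)) T =
                p0 a * lsum (fun t => cyl_weight p0 t * K ((r ++ [a]) ++ t)) T) as ->.
        { rewrite <- lsum_scal. apply lsum_ext_in. intros t _. simpl. rewrite <- app_assoc. simpl. ring. }
        apply Rmult_le_compat_l; auto.
      * intros l Hl'. split; [intros E; subst; contradiction| specialize (Hl l Hl'); lia].
      * eapply Rle_trans; [exact Hs|]. apply HK; auto.
Qed.

Definition hit (K : list nat -> R) (l : list nat) : Prop :=
  1 <= K l /\ forall n, (n < length l)%nat -> K (firstn n l) < 1.

Lemma firstn_app_len (l s : list nat) : firstn (length l) (l ++ s) = l.
Proof. induction l; simpl; [reflexivity| rewrite IHl; reflexivity]. Qed.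

Lemma hit_antichain K A : (forall l, In l A -> hit K l) -> antichain A.
Proof.
  intros H l1 l2 H1 H2 Hne [s Hs].
  destruct s as [|b s]. { apply Hne. rewrite Hs, app_nil_r; reflexivity. }
  destruct (H l2 H2) as [_ Hf]. destruct (H l1 H1) as [Hk _].
  specialize (Hf (length l1)). rewrite Hs in Hf. rewrite firstn_app_len in Hf.
  rewrite length_app in Hf. simpl in Hf. specialize (Hf ltac:(lia)). lra.
Qed.

Lemma len_bound (A : list (list nat)) : exists n, forall l, In l A -> (length l <= n)%nat.
Proof. induction A as [|a A [n Hn]]. exists O; intros _ []. exists (max (length a) n).
  intros l [<-|Hl]; [lia| specialize (Hn l Hl); lia]. Qed.

Lemma head_bound (A : list (list nat)) : exists n, forall l, In l A -> (hd O l <= n)%nat.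
Proof. induction A as [|a A [n Hn]]. exists O; intros _ []. exists (max (hd O a) n).
  intros l [<-|Hl]; [lia| specialize (Hn l Hl); lia]. Qed.

Lemma hits_sum p0 K A : (forall k, 0 <= p0 k) -> supermart p0 K -> NoDup A -> (forall l, In l A -> hit K l) ->
  lsum (cyl_weight p0) A <= K [].
Proof.
  intros Hp HK Hn H. destruct (len_bound A) as [n Hl].
  eapply Rle_trans; [| apply (antichain_bound p0 K Hp HK n [] A Hn (hit_antichain K A H) Hl)].
  apply lsum_le. intros l Hl'. simpl. destruct (H l Hl') as [H1 _]. pose proof (cw_nonneg p0 l Hp). nra.
Qed.

Lemma group_idx p0 (Kf : nat -> list nat -> R) : (forall k, 0 <= p0 k) -> (forall k, supermart p0 (Kf k)) ->
  forall B P, NoDup P -> (forall e, In e P -> exists k l, e = k :: l /\ (k <= B)%nat /\ hit (Kf k) l) ->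
  lsum (fun e => cyl_weight p0 (tl e)) P <= sum_f_R0 (fun k => Kf k []) B.
Proof.
  intros Hp HK. induction B; intros P Hn HP.
  - replace (lsum (fun e => cyl_weight p0 (tl e)) P) with (lsum (cyl_weight p0) (map (@tl nat) P))
      by (rewrite lsum_map; reflexivity). simpl. apply hits_sum; auto.
    + apply (nodup_map_tl 0); auto. intros e He. destruct (HP e He) as [k [l [-> [Hk _]]]]. simpl. apply Nat.eqb_eq. lia.
    + intros l Hl. apply in_map_iff in Hl as [e [<- He]]. destruct (HP e He) as [k [l' [-> [Hk Hh]]]]. simpl.
      replace k with O in Hh by lia. auto.
  - rewrite (lsum_filter _ (headb (S B)) P).
    change (sum_f_R0 (fun k => Kf k []) (S B)) with (sum_f_R0 (fun k => Kf k []) B + Kf (S B) []).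
    assert (lsum (fun e => cyl_weight p0 (tl e)) (filter (headb (S B)) P) <= Kf (S B) []).
    { replace (lsum (fun e => cyl_weight p0 (tl e)) (filter (headb (S B)) P)) with
        (lsum (cyl_weight p0) (map (@tl nat) (filter (headb (S B)) P))) by (rewrite lsum_map; reflexivity).
      apply hits_sum; auto.
      + apply (nodup_map_tl (S B)). apply NoDup_filter; auto. intros e He. apply filter_In in He; tauto.
      + intros l Hl. apply in_map_iff in Hl as [e [<- He]]. apply filter_In in He as [He Hh].
        destruct (HP e He) as [k [l' [-> [Hk Hhit]]]]. simpl in *. apply Nat.eqb_eq in Hh. subst. auto. }
    assert (lsum (fun e => cyl_weight p0 (tl e)) (filter (fun x => negb (headb (S B) x)) P) <= sum_f_R0 (fun k => Kf k []) B).
    { apply IHB. apply NoDup_filter; auto. intros e He. apply filter_In in He as [He Hh].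
      destruct (HP e He) as [k [l' [-> [Hk Hhit]]]]. exists k, l'. simpl in Hh.
      apply Bool.negb_true_iff, Nat.eqb_neq in Hh. split; [reflexivity| split; [lia| exact Hhit]]. }
    lra.
Qed.

Fixpoint enc (l : list nat) : nat := match l with [] => O | a :: t => S (Cantor.to_nat (a, enc t)) end.
Fixpoint dec (f n : nat) : list nat :=
  match f with O => [] | S f' => match n with O => [] | S n' => let (a, b) := Cantor.of_nat n' in a :: dec f' b end end.
Definition enum (m : nat) : list nat := let (f, n) := Cantor.of_nat m in dec f n.
Lemma enum_surj l : exists m, enum m = l.
Proof. exists (Cantor.to_nat (length l, enc l)). unfold enum. rewrite Cantor.cancel_of_to.
  induction l as [|a l IHl]; [reflexivity|]. transitivity (let (a0,b) := Cantor.of_nat (Cantor.to_nat (a, enc l)) in a0 :: dec (length l) b); [reflexivity|]. rewrite Cantor.cancel_of_to, IHl. reflexivity. Qed.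

Lemma least_nat (P : nat -> Prop) : (exists n, P n) -> exists n, P n /\ forall m, (m < n)%nat -> ~ P m.
Proof.
  intros [n Hn]. revert Hn. induction n as [n IH] using (well_founded_induction Wf_nat.lt_wf). intros Hn.
  destruct (classic (exists m, (m < n)%nat /\ P m)) as [[m [Hm Pm]]|Hno].
  - apply (IH m Hm Pm).
  - exists n. split; auto. intros m Hm Pm. apply Hno; eauto.
Qed.

Definition pref (x : nat -> nat) (n : nat) : list nat := map x (seq 0 n).

Lemma pref_len x n : length (pref x n) = n.
Proof. unfold pref. rewrite length_map, length_seq. reflexivity. Qed.

Lemma firstn_pref x n m : (m <= n)%nat -> firstn m (pref x n) = pref x m.
Proof. intros H. replace n with (m + (n - m))%nat by lia. unfold pref. rewrite seq_app, map_app.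
  rewrite <- (pref_len x m) at 1. unfold pref. apply firstn_app_len. Qed.

Lemma pref_S x n : pref x (S n) = pref x n ++ [x n].
Proof. unfold pref. rewrite seq_S, map_app. reflexivity. Qed.

Lemma has_prefix_pref x n : has_prefix x (pref x n).
Proof. intros i Hi. rewrite pref_len in Hi. unfold pref.
  rewrite nth_indep with (d' := x O) by (rewrite length_map, length_seq; auto).
  rewrite map_nth, seq_nth by auto. reflexivity. Qed.

Lemma geom c M : 0 <= c -> sum_f_R0 (fun m => c * (/2)^(S m)) M <= c.
Proof.
  intros Hc. assert (sum_f_R0 (fun m => c * (/2)^(S m)) M = c * (1 - (/2)^(S M))) as ->.
  { induction M. simpl. field. rewrite tech5, IHM. simpl. field. }
  assert (0 <= (/2)^(S M)) by (apply pow_le; lra). nra.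
Qed.

Lemma cw_repeat p0 L : cyl_weight p0 (repeat 0%nat L) = p0 0%nat ^ L.
Proof. induction L; simpl; auto. rewrite IHL. ring. Qed.

Fixpoint Pl (good : nat -> Prop) (M : nat) : list (list nat) :=
  (if excluded_middle_informative (good M) then [enum M] else []) ++
  match M with O => [] | S M' => Pl good M' end.

Lemma Pl_mem good M e : In e (Pl good M) -> exists m, (m <= M)%nat /\ good m /\ enum m = e.
Proof.
  induction M; simpl; destruct (excluded_middle_informative (good _)); simpl; intros H.
  - destruct H as [<-|[]]. exists O; auto.
  - destruct H.
  - destruct H as [<-|H]. exists (S M); auto. destruct (IHM H) as [m [? ?]]. exists m; split; auto.
  - destruct (IHM H) as [m [? ?]]. exists m; split; auto.
Qed.

Lemma Pl_nodup good M : (forall m, good m -> forall m', (m' < m)%nat -> enum m' <> enum m) -> NoDup (Pl good M).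
Proof.
  intros Hg. induction M; simpl; destruct (excluded_middle_informative (good _)); simpl.
  - constructor; [intros []| constructor].
  - constructor.
  - constructor; auto. intros Hin. destruct (Pl_mem _ _ _ Hin) as [m [Hm [_ E]]].
    apply (Hg (S M) g m); auto. lia.
  - auto.
Qed.

Lemma null_from_mart p0 (E : (nat -> nat) -> Prop) :
  (forall k, 0 <= p0 k) -> p0 0%nat < 1 ->
  (forall d, 0 < d -> exists Kf : nat -> list nat -> R,
      (forall k, supermart p0 (Kf k)) /\ (forall B, sum_f_R0 (fun k => Kf k []) B <= d) /\
      (forall x, E x -> exists k n, 1 <= Kf k (pref x n))) ->
  null_set p0 E.
Proof.
  intros Hp Hq HK eps Heps.
  destruct (HK (eps/2) ltac:(lra)) as [Kf [HKs [HKb HKE]]].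
  assert (Hpad : forall m, exists L, cyl_weight p0 (repeat 0%nat L) <= eps/2 * (/2)^(S m)).
  { intros m. destruct (pow_lt_1_zero (p0 0%nat) ltac:(rewrite Rabs_pos_eq; auto; lra) (eps/2 * (/2)^(S m))) as [L HL].
    { apply Rmult_lt_0_compat. lra. apply pow_lt; lra. }
    exists L. rewrite cw_repeat.
    specialize (HL L (le_n _)). rewrite Rabs_pos_eq in HL by (apply pow_le; auto). lra. }
  set (padlen := fun m => proj1_sig (constructive_indefinite_description _ (Hpad m))).
  assert (Hpl : forall m, cyl_weight p0 (repeat 0%nat (padlen m)) <= eps/2 * (/2)^(S m)).
  { intros m. unfold padlen. destruct (constructive_indefinite_description _ (Hpad m)). simpl. auto. }
  set (good := fun m => exists k l, enum m = k :: l /\ hit (Kf k) l /\ forall m', (m' < m)%nat -> enum m' <> enum m).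
  set (cover := fun m => if excluded_middle_informative (good m) then tl (enum m) else repeat 0%nat (padlen m)).
  exists cover. split.
  - intros x Ex. destruct (HKE x Ex) as [k [n Hn]].
    destruct (least_nat (fun n => 1 <= Kf k (pref x n)) (ex_intro _ n Hn)) as [n0 [Hn0 Hmin]].
    assert (Hh : hit (Kf k) (pref x n0)).
    { split; auto. intros i Hi. rewrite pref_len in Hi. rewrite firstn_pref by lia.
      apply Rnot_le_lt. apply Hmin; auto. }
    destruct (least_nat (fun m => enum m = k :: pref x n0) (enum_surj _)) as [m0 [Hm0 Hmmin]].
    exists m0. unfold cover. destruct (excluded_middle_informative (good m0)) as [G|G].
    + rewrite Hm0. simpl. apply has_prefix_pref.
    + exfalso. apply G. exists k, (pref x n0). split; [exact Hm0| split; [exact Hh|]]. intros m' Hm' Em. rewrite Hm0 in Em. exact (Hmmin m' Hm' Em).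
  - intros M.
    assert (H1 : sum_f_R0 (fun m => cyl_weight p0 (cover m)) M <=
              lsum (fun e => cyl_weight p0 (tl e)) (Pl good M) + sum_f_R0 (fun m => eps/2 * (/2)^(S m)) M).
    { induction M.
      - simpl. unfold cover. destruct (excluded_middle_informative (good 0%nat)); simpl.
        + lra.
        + specialize (Hpl O). lra.
      - rewrite tech5. simpl Pl. rewrite lsum_app. rewrite tech5. unfold cover at 2.
        assert (0 <= eps/2 * (/2)^(S (S M))) by (apply Rmult_le_pos; [lra| apply pow_le; lra]).
        destruct (excluded_middle_informative (good (S M))).
        + assert (lsum (fun e => cyl_weight p0 (tl e)) [enum (S M)] = cyl_weight p0 (tl (enum (S M)))) as -> by (simpl; ring).
          lra.
        + specialize (Hpl (S M)). assert (lsum (fun e => cyl_weight p0 (tl e)) [] = 0) as -> by reflexivity. lra. }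
    assert (H2 : lsum (fun e => cyl_weight p0 (tl e)) (Pl good M) <= eps / 2).
    { destruct (head_bound (Pl good M)) as [B HB].
      eapply Rle_trans; [| apply (HKb B)]. apply group_idx; auto.
      - apply Pl_nodup. intros m [k [l [E1 [_ Hf]]]]. auto.
      - intros e He. destruct (Pl_mem _ _ _ He) as [m [_ [[k [l [E1 [Hh _]]]] E2]]].
        exists k, l. rewrite <- E2, E1. specialize (HB e He). rewrite <- E2, E1 in HB. simpl in HB. split; [reflexivity| split; [exact HB| exact Hh]]. }
    pose proof (geom (eps/2) M ltac:(lra)). lra.
Qed.

Definition Yf (j a : nat) : R := if Nat.eqb a j then 1 else 0.
Definition gfac (p0 : nat -> R) j lam a := 1 + lam * (Yf j a - p0 j).
Definition Km p0 j lam (l : list nat) := fold_left (fun acc a => acc * gfac p0 j lam a) l 1.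

Lemma Km_app p0 j lam l a : Km p0 j lam (l ++ [a]) = Km p0 j lam l * gfac p0 j lam a.
Proof. unfold Km. rewrite fold_left_app. reflexivity. Qed.

Lemma Km_pos p0 j lam l : (forall a, 0 < gfac p0 j lam a) -> 0 < Km p0 j lam l.
Proof. intros H. unfold Km. assert (forall acc, 0 < acc -> 0 < fold_left (fun acc a => acc * gfac p0 j lam a) l acc).
  { induction l; simpl; intros acc Ha; auto. apply IHl. apply Rmult_lt_0_compat; auto. }
  apply H0; lra. Qed.

Lemma Yf_cases j a : Yf j a = 0 \/ Yf j a = 1.
Proof. unfold Yf. destruct (Nat.eqb a j); auto. Qed.

Lemma pmf_nonneg p0 : is_pmf p0 -> forall k, 0 <= p0 k.
Proof. intros [H _]; auto. Qed.

Lemma pmf_partial p0 n : is_pmf p0 -> sum_f_R0 p0 n <= 1.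
Proof. intros [H1 H2]. apply isum_partial; auto. Qed.

Lemma pmf_le1 p0 j : is_pmf p0 -> p0 j <= 1.
Proof. intros H. eapply Rle_trans; [apply (term_le_sum p0 j j)|apply (pmf_partial p0 j H)]; auto.
  apply pmf_nonneg; auto. Qed.

Lemma nat_list_bound (F : list nat) : exists N, forall a, In a F -> (a <= N)%nat.
Proof. induction F as [|a F [N HN]]. exists O; intros _ []. exists (max a N). intros b [<-|Hb]; [lia| specialize (HN b Hb); lia]. Qed.

Lemma pmf_lsum p0 F : is_pmf p0 -> NoDup F -> lsum p0 F <= 1.
Proof. intros H Hn. destruct (nat_list_bound F) as [N HN].
  eapply Rle_trans; [apply (lsum_le_partial p0 N F)|apply pmf_partial]; auto. apply pmf_nonneg; auto. Qed.

Lemma lsum_Y_out p0 j F : ~ In j F -> lsum (fun a => p0 a * Yf j a) F = 0.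
Proof. induction F; simpl; intros H; auto. unfold Yf at 1. destruct (Nat.eqb_spec a j). exfalso; auto.
  rewrite IHF; auto. ring. Qed.

Lemma lsum_Y_in p0 j F : NoDup F -> In j F -> lsum (fun a => p0 a * Yf j a) F = p0 j.
Proof. induction F; simpl; intros Hn H; [destruct H|]. inversion Hn; subst.
  unfold Yf at 1. destruct (Nat.eqb_spec a j).
  - subst. rewrite lsum_Y_out; auto. ring.
  - destruct H as [H|H]; [congruence|]. rewrite IHF; auto. ring. Qed.

Lemma gfac_pos p0 j lam a : is_pmf p0 -> -1/2 <= lam <= 1/2 -> 1/2 <= gfac p0 j lam a.
Proof. intros H Hl. unfold gfac. pose proof (pmf_le1 p0 j H). pose proof (pmf_nonneg p0 H j).
  destruct (Yf_cases j a) as [E|E]; rewrite E; nra. Qed.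

Lemma Km_sm p0 j lam : is_pmf p0 -> -1/2 <= lam <= 1/2 -> supermart p0 (Km p0 j lam).
Proof.
  intros H Hl. pose proof (pmf_le1 p0 j H). pose proof (pmf_nonneg p0 H j). split.
  - intros l. left. apply Km_pos. intros a. pose proof (gfac_pos p0 j lam a H Hl). lra.
  - intros l F Hn.
    assert (lsum (fun a => p0 a * Km p0 j lam (l ++ [a])) F =
            Km p0 j lam l * ((1 - lam * p0 j) * lsum p0 F + lam * lsum (fun a => p0 a * Yf j a) F)) as ->.
    { rewrite <- !lsum_scal, <- lsum_plus, <- lsum_scal. apply lsum_ext_in. intros a _.
      rewrite Km_app. unfold gfac. ring. }
    assert (Hk : 0 < Km p0 j lam l) by (apply Km_pos; intros a; pose proof (gfac_pos p0 j lam a H Hl); lra).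
    assert (Hs : (1 - lam * p0 j) * lsum p0 F + lam * lsum (fun a => p0 a * Yf j a) F <= 1).
    { pose proof (pmf_lsum p0 F H Hn). assert (0 <= 1 - lam * p0 j) by nra. assert (0 <= lsum p0 F) by (apply lsum_nonneg; intros; apply pmf_nonneg; auto).
      destruct (In_dec Nat.eq_dec j F) as [Hi|Hi].
      - rewrite lsum_Y_in; auto. nra.
      - rewrite lsum_Y_out; auto. assert (lsum p0 (j :: F) <= 1) by (apply pmf_lsum; auto; constructor; auto).
        simpl in H5. nra. }
    nra.
Qed.

Lemma sm_plus p0 K1 K2 : supermart p0 K1 -> supermart p0 K2 -> supermart p0 (fun l => K1 l + K2 l).
Proof. intros [A1 B1] [A2 B2]. split. intros l; specialize (A1 l); specialize (A2 l); lra.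
  intros l F Hn. assert (lsum (fun a => p0 a * (K1 (l ++ [a]) + K2 (l ++ [a]))) F =
    lsum (fun a => p0 a * K1 (l ++ [a])) F + lsum (fun a => p0 a * K2 (l ++ [a])) F) as ->.
  { rewrite <- lsum_plus. apply lsum_ext_in. intros; ring. }
  specialize (B1 l F Hn). specialize (B2 l F Hn). lra. Qed.

Lemma sm_scal p0 c K : 0 <= c -> supermart p0 K -> supermart p0 (fun l => c * K l).
Proof. intros Hc [A B]. split. intros l; specialize (A l); nra.
  intros l F Hn. assert (lsum (fun a => p0 a * (c * K (l ++ [a]))) F = c * lsum (fun a => p0 a * K (l ++ [a])) F) as ->.
  { rewrite <- lsum_scal. apply lsum_ext_in. intros; ring. }
  specialize (B l F Hn). nra. Qed.

Lemma sm_sum p0 (F : nat -> list nat -> R) k : (forall j, supermart p0 (F j)) -> supermart p0 (fun l => sum_f_R0 (fun j => F j l) k).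
Proof. intros H. induction k. exact (H O). exact (sm_plus p0 _ _ IHk (H (S k))). Qed.

Lemma exp_mono a b : a <= b -> exp a <= exp b.
Proof. intros [H|H]; [left; apply exp_increasing; auto| subst; lra]. Qed.

Lemma exp_bound t : -1/2 <= t -> exp (t - 2 * t^2) <= 1 + t.
Proof.
  intros Ht. set (u := t / (1 + t)).
  assert (Hu1 : 1 - u = / (1 + t)) by (unfold u; field; lra).
  assert (Hu2 : t - 2 * t^2 <= u).
  { unfold u. apply Rle_trans with (t - t^2 / (1 + t)).
    - assert (t^2 / (1+t) <= 2 * t^2). { apply Rmult_le_reg_r with (1 + t). lra.
        unfold Rdiv. rewrite Rmult_assoc, Rinv_l by lra. nra. } lra.
    - right. field. lra. }
  apply Rle_trans with (exp u). apply exp_mono; auto.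
  pose proof (exp_ineq1_le (- u)). rewrite exp_Ropp in H.
  assert (0 < / (1 + t)) by (apply Rinv_0_lt_compat; lra).
  assert (0 < exp u) by apply exp_pos.
  replace (1 + t) with (/ / (1 + t)) by (field; lra).
  rewrite <- (Rinv_inv (exp u)). apply Rinv_le_contravar; auto. lra.
Qed.

Lemma count_S x j n : INR (count_eq x j (S n)) = Yf j (x n) + INR (count_eq x j n).
Proof. simpl. rewrite plus_INR. unfold Yf. destruct (Nat.eqb (x n) j); simpl; ring. Qed.

Lemma Km_pre p0 j lam x n : is_pmf p0 -> -1/2 <= lam <= 1/2 ->
  exp (lam * (INR (count_eq x j n) - INR n * p0 j) - 2 * lam^2 * INR n) <= Km p0 j lam (pref x n).
Proof.
  intros H Hl. pose proof (pmf_le1 p0 j H). pose proof (pmf_nonneg p0 H j). induction n.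
  - unfold Km, pref; simpl. match goal with |- exp ?e <= _ => replace e with 0 by ring end. rewrite exp_0. lra.
  - rewrite pref_S, Km_app, count_S, S_INR.
    set (t := lam * (Yf j (x n) - p0 j)).
    replace (lam * (Yf j (x n) + INR (count_eq x j n) - (INR n + 1) * p0 j) - 2 * lam ^ 2 * (INR n + 1))
      with ((lam * (INR (count_eq x j n) - INR n * p0 j) - 2 * lam^2 * INR n) + (t - 2 * lam^2)) by (unfold t; ring).
    rewrite exp_plus.
    assert (Ht : t^2 <= lam^2). { unfold t. assert (0 <= (1 - p0 j) * p0 j) by nra. assert (0 <= lam^2) by nra.
      destruct (Yf_cases j (x n)) as [E|E]; rewrite E.
      - replace ((lam * (0 - p0 j))^2) with (lam^2 * (p0 j)^2) by ring. assert (p0 j ^ 2 <= 1) by nra. nra.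
      - replace ((lam * (1 - p0 j))^2) with (lam^2 * (1 - p0 j)^2) by ring. assert ((1 - p0 j) ^ 2 <= 1) by nra. nra. }
    assert (Ht2 : -1/2 <= t). { unfold t. destruct (Yf_cases j (x n)) as [E|E]; rewrite E; nra. }
    assert (exp (t - 2 * lam^2) <= gfac p0 j lam (x n)).
    { apply Rle_trans with (exp (t - 2 * t^2)). apply exp_mono; lra. apply exp_bound; auto. }
    apply Rmult_le_compat; auto; left; apply exp_pos.
Qed.

Lemma dev_big p0 j x n eps : is_pmf p0 -> (1 <= n)%nat -> 0 < eps <= 1 ->
  eps <= Rabs (INR (count_eq x j n) / INR n - p0 j) ->
  1 + INR n * eps^2 / 8 <= Km p0 j (eps/4) (pref x n) + Km p0 j (-(eps/4)) (pref x n).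
Proof.
  intros H Hn He Hd. set (c := INR (count_eq x j n)) in *. set (m := INR n) in *.
  assert (Hm : 1 <= m) by (unfold m; apply (le_INR 1); auto).
  assert (Hc : eps * m <= c - m * p0 j \/ c - m * p0 j <= - (eps * m)).
  { replace (c / m - p0 j) with ((c - m * p0 j) / m) in Hd by (field; lra).
    unfold Rdiv in Hd. rewrite Rabs_mult, Rabs_inv, (Rabs_pos_eq m) in Hd by lra.
    assert (eps * m <= Rabs (c - m * p0 j)).
    { apply Rmult_le_reg_r with (/ m). apply Rinv_0_lt_compat; lra.
      rewrite Rmult_assoc, Rinv_r, Rmult_1_r by lra. auto. }
    destruct (Rcase_abs (c - m * p0 j)); [rewrite Rabs_left in H0 by auto| rewrite Rabs_right in H0 by auto]; lra. }
  assert (Hp1 : 0 < Km p0 j (eps/4) (pref x n)) by (apply Km_pos; intros a; pose proof (gfac_pos p0 j (eps/4) a H ltac:(lra)); lra).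
  assert (Hp2 : 0 < Km p0 j (-(eps/4)) (pref x n)) by (apply Km_pos; intros a; pose proof (gfac_pos p0 j (-(eps/4)) a H ltac:(lra)); lra).
  pose proof (exp_ineq1_le (m * eps^2 / 8)).
  destruct Hc as [Hc|Hc].
  - pose proof (Km_pre p0 j (eps/4) x n H ltac:(lra)). fold c m in H1.
    assert (exp (m * eps^2 / 8) <= exp (eps / 4 * (c - m * p0 j) - 2 * (eps / 4) ^ 2 * m)) by (apply exp_mono; nra).
    lra.
  - pose proof (Km_pre p0 j (-(eps/4)) x n H ltac:(lra)). fold c m in H1.
    assert (exp (m * eps^2 / 8) <= exp (-(eps / 4) * (c - m * p0 j) - 2 * (-(eps / 4)) ^ 2 * m)) by (apply exp_mono; nra).
    lra.
Qed.

Definition Bad (p0 : nat -> R) (k : nat) (x : nat -> nat) : Prop :=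
  exists j, (j <= k)%nat /\ forall N, exists n, (N <= n)%nat /\ (1 <= n)%nat /\
     / INR (S k) <= Rabs (empirical x n j - p0 j).

Definition Ebad p0 x := exists k, Bad p0 k x.

Lemma sum_const a k : sum_f_R0 (fun _ => a) k = INR (S k) * a.
Proof. induction k. simpl; ring. rewrite tech5, IHk. rewrite (S_INR (S k)). ring. Qed.

Lemma p00_lt1 p0 : is_pmf p0 -> support_ok p0 -> p0 0%nat < 1.
Proof.
  intros H Hs. assert (0 < p0 1%nat).
  { destruct Hs as [Hs|[S [HS Hs]]]; auto. apply Hs. auto. }
  pose proof (pmf_partial p0 1 H). simpl in H1. lra.
Qed.

Lemma Ebad_null p0 : is_pmf p0 -> support_ok p0 -> null_set p0 (Ebad p0).
Proof.
  intros H Hs. apply null_from_mart.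
  - apply pmf_nonneg; auto.
  - apply p00_lt1; auto.
  - intros d Hd.
    set (ep := fun k : nat => / INR (S k)).
    assert (Hep : forall k, 0 < ep k <= 1).
    { intros k. unfold ep. pose proof (pos_INR k). rewrite S_INR. split. apply Rinv_0_lt_compat; lra.
      rewrite <- Rinv_1. apply Rinv_le_contravar; lra. }
    set (c := fun k : nat => d * (/2)^(S k) / (2 * INR (S k))).
    assert (Hc : forall k, 0 < c k).
    { intros k. unfold c. pose proof (pos_INR k). rewrite S_INR. apply Rmult_lt_0_compat.
      apply Rmult_lt_0_compat; auto. apply pow_lt; lra. apply Rinv_0_lt_compat; lra. }
    exists (fun k l => c k * sum_f_R0 (fun j => Km p0 j (ep k / 4) l + Km p0 j (-(ep k / 4)) l) k).
    split; [|split].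
    + intros k. apply sm_scal. left; auto. apply sm_sum. intros j.
      specialize (Hep k). apply sm_plus; apply Km_sm; auto; lra.
    + intros B. eapply Rle_trans; [| apply (geom d B); lra]. right. apply sum_eq. intros k _.
      assert (sum_f_R0 (fun j => Km p0 j (ep k / 4) [] + Km p0 j (-(ep k / 4)) []) k = INR (S k) * 2) as ->.
      { rewrite <- sum_const. apply sum_eq. intros; unfold Km; simpl. ring. }
      unfold c. pose proof (pos_INR k). rewrite (S_INR k). field. lra.
    + intros x [k [j [Hj Hinf]]].
      set (e := ep k). specialize (Hep k). fold e in Hep.
      destruct (INR_archimed (c k * e^2 / 8) 1) as [N HN].
      { apply Rmult_lt_0_compat; [apply Rmult_lt_0_compat; [auto| apply pow_lt; lra]| lra]. }
      destruct (Hinf N) as [n [HNn [Hn1 Hdev]]].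
      exists k, n.
      pose proof (dev_big p0 j x n e H Hn1 Hep Hdev).
      assert (Hterm : Km p0 j (e / 4) (pref x n) + Km p0 j (-(e / 4)) (pref x n) <=
                      sum_f_R0 (fun j0 => Km p0 j0 (e / 4) (pref x n) + Km p0 j0 (-(e / 4)) (pref x n)) k).
      { apply (term_le_sum (fun j0 => Km p0 j0 (e / 4) (pref x n) + Km p0 j0 (-(e / 4)) (pref x n))); auto.
        intros i. pose proof (Km_pos p0 i (e/4) (pref x n)). pose proof (Km_pos p0 i (-(e/4)) (pref x n)).
        assert (forall a, 0 < gfac p0 i (e/4) a) by (intros a; pose proof (gfac_pos p0 i (e/4) a H ltac:(lra)); lra).
        assert (forall a, 0 < gfac p0 i (-(e/4)) a) by (intros a; pose proof (gfac_pos p0 i (-(e/4)) a H ltac:(lra)); lra).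
        specialize (H1 H3). specialize (H2 H4). lra. }
      assert (INR N <= INR n) by (apply le_INR; auto).
      assert (0 <= INR N) by apply pos_INR.
      specialize (Hc k).
      assert (1 < c k * (1 + INR n * e ^ 2 / 8)).
      { assert (0 <= c k * e^2 / 8) by (assert (0 <= e^2) by nra; apply Rmult_le_pos; [nra|lra]).
        assert (INR N * (c k * e^2 / 8) <= INR n * (c k * e^2 / 8)) by (apply Rmult_le_compat_r; auto).
        nra. }
      cbv beta. change (ep k) with e. apply Rle_trans with (c k * (1 + INR n * e^2/8)); [lra|]. apply Rmult_le_compat_l; lra.
Qed.

Lemma Yf_sum a M : sum_f_R0 (fun j => Yf j a) M = if Nat.leb a M then 1 else 0.
Proof.
  induction M.
  - simpl. unfold Yf. destruct (Nat.eqb_spec a 0), (Nat.leb_spec a 0); auto; lia.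
  - rewrite tech5, IHM. unfold Yf.
    destruct (Nat.leb_spec a M), (Nat.eqb_spec a (S M)), (Nat.leb_spec a (S M)); try lia; ring.
Qed.

Lemma count_sum x n M : sum_f_R0 (fun j => INR (count_eq x j n)) M <= INR n.
Proof.
  induction n.
  - simpl. rewrite sum_const. lra.
  - rewrite (sum_eq _ (fun j => Yf j (x n) + INR (count_eq x j n))) by (intros; apply count_S).
    rewrite plus_sum, Yf_sum, S_INR. destruct (Nat.leb (x n) M); lra.
Qed.

Lemma emp_sum x n M : (1 <= n)%nat -> sum_f_R0 (empirical x n) M <= 1.
Proof.
  intros Hn. assert (0 < INR n) by (apply lt_0_INR; lia).
  rewrite (sum_eq _ (fun j => / INR n * INR (count_eq x j n))) by (intros; unfold empirical, Rdiv; ring).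
  rewrite sum_scal. pose proof (count_sum x n M).
  apply Rmult_le_reg_l with (INR n); auto. rewrite <- Rmult_assoc, Rinv_r by lra. lra.
Qed.

Lemma emp_nonneg x n j : 0 <= empirical x n j.
Proof. unfold empirical. destruct n. simpl. unfold Rdiv. rewrite Rinv_0. lra.
  apply Rmult_le_pos. apply pos_INR. left. apply Rinv_0_lt_compat. apply lt_0_INR. lia. Qed.

Lemma emp_le1 x n j : (1 <= n)%nat -> empirical x n j <= 1.
Proof. intros Hn. eapply Rle_trans; [apply (term_le_sum (empirical x n) j j)|apply (emp_sum x n j Hn)]; auto.
  intros; apply emp_nonneg. Qed.

Lemma emp_fin x n : exists M, forall j, (M < j)%nat -> empirical x n j = 0.
Proof.
  assert (exists M, forall j, (M < j)%nat -> count_eq x j n = O) as [M HM].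
  { induction n. exists O. intros; reflexivity. destruct IHn as [M HM]. exists (max M (x n)).
    intros j Hj. simpl. rewrite HM by lia. destruct (Nat.eqb_spec (x n) j); lia. }
  exists M. intros j Hj. unfold empirical. rewrite HM by auto. simpl. unfold Rdiv. ring.
Qed.

Lemma finite_max (P : nat -> nat -> Prop) J :
  (forall j, (j <= J)%nat -> exists N, forall n, (N <= n)%nat -> P j n) ->
  exists N, forall n, (N <= n)%nat -> forall j, (j <= J)%nat -> P j n.
Proof.
  induction J; intros H.
  - destruct (H O (le_n _)) as [N HN]. exists N. intros n Hn j Hj. replace j with O by lia. auto.
  - destruct IHJ as [N1 H1]. intros j Hj; apply H; lia.
    destruct (H (S J) (le_n _)) as [N2 H2]. exists (max N1 N2). intros n Hn j Hj.
    destruct (Nat.eq_dec j (S J)). subst. apply H2; lia. apply H1; lia.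
Qed.

Lemma ptwise p0 x : ~ Ebad p0 x -> forall J g, 0 < g -> exists N, forall n, (N <= n)%nat -> (1 <= n)%nat ->
  forall j, (j <= J)%nat -> Rabs (empirical x n j - p0 j) < g.
Proof.
  intros HE J g Hg.
  destruct (INR_archimed g 1 Hg) as [K0 HK0].
  set (k := max J K0).
  assert (Hk : / INR (S k) < g).
  { assert (INR K0 <= INR k) by (apply le_INR; lia). rewrite S_INR.
    pose proof (pos_INR k). apply Rmult_lt_reg_l with (INR k + 1). lra.
    rewrite Rinv_r by lra. nra. }
  assert (HnB : ~ Bad p0 k x) by (intros B; apply HE; exists k; auto).
  destruct (finite_max (fun j n => (1 <= n)%nat -> Rabs (empirical x n j - p0 j) < / INR (S k)) J) as [N HN].
  { intros j Hj. apply NNPP. intros Hno. apply HnB. exists j. split. lia. intros N.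
    apply NNPP. intros Hno2. apply Hno. exists N. intros n Hn H1. apply Rnot_le_lt. intros Hle.
    apply Hno2. exists n. auto. }
  exists N. intros n Hn H1 j Hj. specialize (HN n Hn j Hj H1). lra.
Qed.

Lemma sum_mono_idx (f : nat -> R) M M' : (forall i, 0 <= f i) -> (M <= M')%nat -> sum_f_R0 f M <= sum_f_R0 f M'.
Proof. intros H Hm. induction Hm. lra. rewrite tech5. specialize (H (S m)). lra. Qed.

Lemma sum_trunc (f : nat -> R) J M : (J <= M)%nat -> sum_f_R0 (fun j => if Nat.leb j J then f j else 0) M = sum_f_R0 f J.
Proof.
  intros H. induction H.
  - apply sum_eq. intros i Hi. destruct (Nat.leb_spec i J); auto; lia.
  - rewrite tech5, IHle. destruct (Nat.leb_spec (S m) J); try lia. ring.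
Qed.

Lemma dsmall p0 x : is_pmf p0 -> ~ Ebad p0 x -> forall eta, 0 < eta -> exists N, forall n, (N <= n)%nat -> (1 <= n)%nat ->
  forall M, sum_f_R0 (fun j => (empirical x n j - p0 j)^2) M <= eta.
Proof.
  intros H HE eta He.
  destruct H as [Hp0 Hs]. pose proof (conj Hp0 Hs) as H.
  destruct (Hs (eta/4) ltac:(lra)) as [J HJ]. specialize (HJ J (le_n _)).
  unfold Rdist in HJ. pose proof (pmf_partial p0 J H).
  rewrite Rabs_left1 in HJ by lra.
  set (SJ := INR (S J)). assert (HSJ : 1 <= SJ) by (unfold SJ; rewrite S_INR; pose proof (pos_INR J); lra).
  set (g := Rmin 1 (eta / (4 * SJ))).
  assert (Hg : 0 < g). { unfold g. apply Rmin_glb_lt. lra. apply Rdiv_lt_0_compat; lra. }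
  assert (Hg1 : g <= 1) by apply Rmin_l.
  assert (Hg2 : SJ * g <= eta / 4).
  { assert (g <= eta / (4 * SJ)) by apply Rmin_r.
    apply Rle_trans with (SJ * (eta / (4 * SJ))). apply Rmult_le_compat_l; lra. right. field. lra. }
  destruct (ptwise p0 x HE J g Hg) as [N HN].
  exists N. intros n Hn H1 M.
  set (pn := empirical x n).
  assert (Hpn0 : forall j, 0 <= pn j) by (intros; apply emp_nonneg).
  assert (Hpn1 : forall j, pn j <= 1) by (intros; apply emp_le1; auto).
  assert (Hp1 : forall j, p0 j <= 1) by (intros; apply pmf_le1; auto).
  set (M' := max M J).
  apply Rle_trans with (sum_f_R0 (fun j => (pn j - p0 j)^2) M').
  { apply sum_mono_idx. intros; apply pow2_ge_0. lia. }
  apply Rle_trans with (sum_f_R0 (fun j => (if Nat.leb j J then g^2 else 0) + (pn j + p0 j - (if Nat.leb j J then pn j + p0 j else 0))) M').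
  { apply sum_Rle. intros j _. destruct (Nat.leb_spec j J).
    - specialize (HN n Hn H1 j H2). fold pn in HN.
      assert ((pn j - p0 j)^2 <= g^2). { rewrite <- (pow2_abs (pn j - p0 j)).
        pose proof (Rabs_pos (pn j - p0 j)). nra. }
      cbv iota. lra.
    - specialize (Hp0 j). specialize (Hpn0 j). specialize (Hpn1 j). specialize (Hp1 j).
      assert ((pn j - p0 j)^2 <= Rabs (pn j - p0 j)).
      { rewrite <- (pow2_abs (pn j - p0 j)). assert (Rabs (pn j - p0 j) <= 1) by (apply Rabs_le; lra).
        pose proof (Rabs_pos (pn j - p0 j)). nra. }
      assert (Rabs (pn j - p0 j) <= pn j + p0 j) by (apply Rabs_le; lra). cbv iota. lra. }
  rewrite plus_sum, minus_sum, plus_sum.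
  rewrite (sum_trunc (fun _ => g^2)) by lia. rewrite (sum_trunc (fun j => pn j + p0 j)) by lia.
  rewrite plus_sum, sum_const. fold SJ.
  pose proof (emp_sum x n M' H1). fold pn in H2. pose proof (pmf_partial p0 M' H).
  assert (sum_f_R0 pn J >= sum_f_R0 p0 J - SJ * g).
  { unfold SJ. rewrite <- sum_const, <- minus_sum. apply Rle_ge. apply sum_Rle. intros j Hj.
    specialize (HN n Hn H1 j Hj). fold pn in HN. apply Rabs_def2 in HN. lra. }
  assert (SJ * g^2 <= SJ * g) by (apply Rmult_le_compat_l; nra).
  lra.
Qed.

Lemma pow_lt_strict x y k : 0 <= x < y -> (1 <= k)%nat -> x^k < y^k.
Proof.
  intros Hxy Hk. destruct k. lia. clear Hk. induction k. simpl; lra.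
  change (x * x^(S k) < y * y^(S k)). pose proof (pow_le x (S k) ltac:(lra)). nra.
Qed.

Lemma sq_le2 a b : (a - b)^2 <= 2 * a^2 + 2 * b^2.
Proof. pose proof (pow2_ge_0 (a+b)). nra. Qed.

Lemma det r p0 pn q eps : (r = None \/ exists k : nat, r = Some k /\ (2 <= k)%nat) -> is_pmf p0 -> convex_seq p0 ->
  (forall j, 0 <= pn j) ->
  (exists M, forall j, (M < j)%nat -> pn j = 0) ->
  (forall M, sum_f_R0 (fun j => (pn j - p0 j)^2) M <= eps^2/8) -> is_LSE pn q -> 0 < eps ->
  exists v, lr_norm r (fun j => q j - p0 j) v /\ v < eps.
Proof.
  intros Hr H Hcv Hpn0 [Mf Hf] HM [[Hcq [lq Hlq]] Hmin] He.
  pose proof (pmf_nonneg p0 H) as Hp0. pose proof (pmf_le1 p0) as Hp1.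
  assert (Hpn2 : infinite_sum (fun j => pn j ^2) (sum_f_R0 (fun j => pn j ^2) Mf)).
  { apply isum_fin. intros k Hk. rewrite Hf by auto. ring. }
  assert (Hp02 : exists l, infinite_sum (fun j => p0 j ^ 2) l).
  { apply isum_dom with p0. intros n. split. apply pow2_ge_0. specialize (Hp0 n). specialize (Hp1 n H). nra.
    exists 1. destruct H; auto. }
  destruct Hp02 as [l02 Hl02].
  destruct (isum_dom (fun j => (pn j - p0 j)^2) (fun j => 2 * pn j ^2 + 2 * p0 j ^2)) as [D HD].
  { intros n; split. apply pow2_ge_0. apply sq_le2. }
  { eexists. apply isum_lin; eauto. }
  assert (HDb : D <= eps^2/8) by (apply (isum_bound _ _ _ HM HD)).
  destruct (isum_dom (fun j => (pn j - q j)^2) (fun j => 2 * pn j ^2 + 2 * q j ^2)) as [A HA].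
  { intros n; split. apply pow2_ge_0. apply sq_le2. }
  { eexists. apply isum_lin; eauto. }
  assert (HAD : / 2 * A <= / 2 * D).
  { apply (Hmin p0).
    - split; auto. exists l02; auto.
    - apply isum_scal; auto.
    - apply isum_scal; auto. }
  destruct (isum_dom (fun j => (q j - p0 j)^2) (fun j => 2 * (pn j - q j)^2 + 2 * (pn j - p0 j)^2)) as [S2 HS2].
  { intros n; split. apply pow2_ge_0. pose proof (pow2_ge_0 ((q n - pn n) - (pn n - p0 n))). nra. }
  { eexists. apply isum_lin; eauto. }
  assert (HS2b : S2 <= 2 * A + 2 * D).
  { refine (isum_le _ _ _ _ _ HS2 (isum_lin _ _ _ _ 2 2 HA HD)). intros n. cbv beta.
    pose proof (pow2_ge_0 ((q n - pn n) - (pn n - p0 n))). nra. }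
  set (T := 3 * eps / 4).
  assert (HS2T : S2 <= T^2) by (unfold T; nra).
  assert (HT : forall j, Rabs (q j - p0 j) <= T).
  { intros j. assert ((q j - p0 j)^2 <= S2).
    { apply Rle_trans with (sum_f_R0 (fun j => (q j - p0 j)^2) j).
      apply (term_le_sum (fun j => (q j - p0 j)^2)); auto. intros; apply pow2_ge_0.
      apply isum_partial; auto. intros; apply pow2_ge_0. }
    rewrite <- (pow2_abs (q j - p0 j)) in H0. pose proof (Rabs_pos (q j - p0 j)).
    assert (0 <= T) by (unfold T; lra). nra. }
  assert (HTe : T < eps) by (unfold T; lra).
  assert (HT0 : 0 <= T) by (unfold T; lra).
  destruct Hr as [->|[k [-> Hk]]].
  - simpl. destruct (completeness (fun y => exists j, y = Rabs (q j - p0 j))) as [v Hv].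
    { exists T. intros y [j ->]. auto. }
    { exists (Rabs (q 0%nat - p0 0%nat)). exists 0%nat. auto. }
    exists v. split; auto. destruct Hv as [_ Hv]. assert (v <= T). { apply Hv. intros y [j ->]. auto. } lra.
  - simpl.
    assert (Hdom : forall j, 0 <= Rabs (q j - p0 j) ^ k <= T^(k-2) * (q j - p0 j)^2).
    { intros j. split. apply pow_le, Rabs_pos.
      replace k with ((k - 2) + 2)%nat at 1 by lia. rewrite pow_add, pow2_abs.
      apply Rmult_le_compat_r. apply pow2_ge_0. apply pow_incr. split; auto. apply Rabs_pos. }
    destruct (isum_dom (fun j => Rabs (q j - p0 j) ^ k) (fun j => T^(k-2) * (q j - p0 j)^2) Hdom) as [s Hs].
    { eexists. apply isum_scal; eauto. }
    assert (Hs0 : 0 <= s) by (apply (isum_nonneg _ _ (fun j => proj1 (Hdom j)) Hs)).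
    assert (HsT : s <= T^k).
    { apply Rle_trans with (T^(k-2) * S2).
      apply (isum_le _ _ _ _ (fun j => proj2 (Hdom j)) Hs (isum_scal _ _ _ HS2)).
      replace (T^k) with (T^(k-2) * T^2) by (rewrite <- pow_add; f_equal; lia).
      apply Rmult_le_compat_l; auto. apply pow_le; auto. }
    assert (HTk : T^k < eps^k) by (apply pow_lt_strict; [lra| lia]).
    destruct Hs0 as [Hs0|Hs0].
    + exists (Rpower s (/ INR k)).
      assert (Hv0 : 0 < Rpower s (/ INR k)) by (unfold Rpower; apply exp_pos).
      assert (Hvk : Rpower s (/ INR k) ^ k = s).
      { rewrite <- Rpower_pow by auto. rewrite Rpower_mult, Rinv_l. apply Rpower_1; auto.
        apply not_0_INR. lia. }
      split. split. lra. rewrite Hvk. auto.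
      destruct (Rlt_or_le (Rpower s (/ INR k)) eps) as [Hl|Hl]; auto.
      exfalso. assert (eps^k <= Rpower s (/ INR k) ^ k) by (apply pow_incr; lra). lra.
    + exists 0. split. split. lra. rewrite pow_i by lia. rewrite Hs0. auto. auto.
Qed.

Theorem proposition2 :
  forall (r : option nat),
    (r = None \/ exists k : nat, r = Some k /\ (2 <= k)%nat) ->
  forall (p0 : nat -> R),
    is_pmf p0 -> convex_seq p0 -> support_ok p0 ->
  exists E : (nat -> nat) -> Prop,
    null_set p0 E /\
    forall x : nat -> nat, ~ E x ->
    forall phat : nat -> nat -> R,
      (forall n, (1 <= n)%nat -> is_LSE (empirical x n) (phat n)) ->
      forall eps : R, 0 < eps ->
        exists N : nat, forall n, (N <= n)%nat ->
          exists v : R, lr_norm r (fun j => phat n j - p0 j) v /\ v < eps.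
Proof.
  intros r Hr p0 H Hcv Hs. exists (Ebad p0). split.
  - apply Ebad_null; auto.
  - intros x HE phat Hl eps He.
    destruct (dsmall p0 x H HE (eps^2/8) ltac:(nra)) as [N HN].
    exists (max N 1). intros n Hn.
    apply (det r p0 (empirical x n) (phat n) eps Hr H Hcv).
    + intros; apply emp_nonneg.
    + apply emp_fin.
    + apply HN; lia.
    + apply Hl; lia.
    + auto.
Qed.
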